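(* Let $(X,\rho)$ be a metric space, $f:X\to X$ continuous, $x\in X$, $\ell\in\mathbb N$, $n\ge2$ an integer and $\varepsilon>0$. Then \[ \mathrm{RR}_\ell(x,n,\varepsilon)=\frac{n}{n-1}\Big[\ell\,C_\ell(x,n,\varepsilon)-(\ell-1)C_{\ell+1}(x,n,\varepsilon)\Big]-\frac1{n-1}+\delta^{\mathrm{RR}}_\ell, \qquad |\delta^{\mathrm{RR}}_\ell|\le\frac{2\ell(\ell-1)}{n}. \]
   Context: Bowen metric $\rho_\ell(y,z)=\max_{0\le i<\ell}\rho(f^iy,f^iz)$; correlation sum $C_\ell(x,n,\varepsilon)=n^{-2}\#\{(i,j):0\le i,j<n,\ \rho_\ell(f^ix,f^jx)\le\varepsilon\}$. Recurrence plot $R(x,n,\varepsilon)$: $n\times n$ matrix ($0\le i,j<n$) with entry $1$ iff $\rho(f^ix,f^jx)\le\varepsilon$. A line of length $\ell$: triple $(i,j,\ell)$ with $0\le i,j\le n-\ell$, $i\ne j$, entries $(i+k,j+k)=1$ for $0\le k<\ell$, entry $(i-1,j-1)=0$ if $\min\{i,j\}>0$, entry $(i+\ell,j+\ell)=0$ if $\max\{i,j\}<n-\ell$. $N_l$ = number of lines of length exactly $l$ (boundary lines included), $\lambda_l=N_l/(n^2-n)$, recurrence rate $\mathrm{RR}_\ell(x,n,\varepsilon)=\sum_{l\ge\ell}l\lambda_l$. *)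

(* Defs.v *)
From HB Require Import structures.
From mathcomp Require Import all_boot all_order all_algebra.
From mathcomp Require Import reals.
Set Implicit Arguments. Unset Strict Implicit. Unset Printing Implicit Defensive.
Import Order.TTheory GRing.Theory Num.Theory.
Local Open Scope ring_scope.

Section RecurrenceDefs.
Variables (R : realType) (X : Type) (rho : X -> X -> R) (f : X -> X).

Definition is_metric : Prop :=
  [/\ forall y z, 0 <= rho y z,
      forall y z, rho y z = 0 <-> y = z,
      forall y z, rho y z = rho z y &
      forall y z w, rho y w <= rho y z + rho z w].

Definition metric_continuous : Prop :=
  forall y (e : R), 0 < e -> exists2 d : R, 0 < d &
    forall z, rho y z < d -> rho (f y) (f z) < e.

Definition bowen (l : nat) (y z : X) : R :=
  \big[Num.max/0]_(i < l) rho (iter i f y) (iter i f z).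

Definition corr_sum (l : nat) (x : X) (n : nat) (eps : R) : R :=
  (#|[set p : 'I_n * 'I_n |
       bowen l (iter p.1 f x) (iter p.2 f x) <= eps]|)%:R / (n ^ 2)%:R.

Definition rp_entry (x : X) (eps : R) (i j : nat) : bool :=
  rho (iter i f x) (iter j f x) <= eps.

Definition is_line (x : X) (n : nat) (eps : R) (i j l : nat) : bool :=
  [&& (i <= n - l)%N, (j <= n - l)%N, i != j,
      [forall k : 'I_l, rp_entry x eps (i + k) (j + k)],
      (0 < minn i j)%N ==> ~~ rp_entry x eps i.-1 j.-1 &
      (maxn i j < n - l)%N ==> ~~ rp_entry x eps (i + l) (j + l)].

Definition num_lines (x : X) (n : nat) (eps : R) (l : nat) : nat :=
  #|[set p : 'I_n.+1 * 'I_n.+1 | is_line x n eps p.1 p.2 l]|.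

Definition line_freq (x : X) (n : nat) (eps : R) (l : nat) : R :=
  (num_lines x n eps l)%:R / ((n ^ 2)%:R - n%:R).

(* RR_l(x,n,eps) = sum_{l' >= l} l' lambda_{l'}; lines have length <= n,
   so the sum is over l <= l' <= n. *)
Definition recurrence_rate (l : nat) (x : X) (n : nat) (eps : R) : R :=
  \sum_(l <= l' < n.+1) l'%:R * line_freq x n eps l'.

End RecurrenceDefs.

(* Main.v *)
Require Import Defs.
From HB Require Import structures.
From mathcomp Require Import all_boot all_order all_algebra.
From mathcomp Require Import reals.
From mathcomp Require Import zify ring lra.
Import Order.TTheory GRing.Theory Num.Theory.


Lemma card_pairs N (P : nat -> nat -> bool) :
  #|[set p : 'I_N * 'I_N | P p.1 p.2]| = \sum_(i < N) \sum_(j < N) P i j.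
Proof.
rewrite -sum1dep_card big_mkcond /=.
rewrite (pair_bigA _ (fun i j => (P (nat_of_ord i) (nat_of_ord j)) : nat)) /=.
by apply: eq_bigr => p _; case: (P _ _).
Qed.

Definition G (e : nat -> nat -> bool) m i j := all (fun k => e (i+k) (j+k)) (iota 0 m).
Definition W e n m i j := [&& i != j, i + m <= n, j + m <= n & G e m i j].
Definition Acnt e n m := \sum_(i < n.+1) \sum_(j < n.+1) W e n m i j.
Definition Brt e n m i j := W e n m i j && ~~ W e n m.+1 i j.
Definition Bcnt e n m := \sum_(i < n.+1) \sum_(j < n.+1) Brt e n m i j.
Definition Line e n m i j := [&& i <= n - m, j <= n - m, i != j, G e m i j,
   (0 < minn i j) ==> ~~ e i.-1 j.-1 & (maxn i j < n - m) ==> ~~ e (i+m) (j+m)].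
Definition Ncnt e n m := \sum_(i < n.+1) \sum_(j < n.+1) Line e n m i j.

Lemma GS e m i j : G e m.+1 i j = e i j && G e m i.+1 j.+1.
Proof.
rewrite /G /= !addn0 -(addn0 1) iotaDl all_map; congr (_ && _).
by apply: eq_in_all => k _ /=; rewrite !addnA !addn1.
Qed.

Lemma GSr e m i j : G e m.+1 i j = G e m i j && e (i+m) (j+m).
Proof.
by rewrite /G -addn1 iotaD all_cat /= andbT add0n.
Qed.

Lemma WS e n m i j : W e n m.+1 i j = e i j && W e n m i.+1 j.+1.
Proof.
rewrite /W GS eqSS !addSnnS.
by case: (e i j); case: (i != j); case: (i + m.+1 <= n); case: (j + m.+1 <= n).
Qed.

Lemma Wmono e n m i j : W e n m.+1 i j -> W e n m i j.
Proof.
rewrite /W GSr => /and4P [-> h1 h2 /andP[-> _]].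
by rewrite !andbT; apply/andP; split; lia.
Qed.

Lemma A_split e n m : Acnt e n m = Acnt e n m.+1 + Bcnt e n m.
Proof.
rewrite /Acnt /Bcnt -big_split; apply: eq_bigr => i _.
rewrite -big_split; apply: eq_bigr => j _ /=; rewrite /Brt.
by case E: (W e n m.+1 i j); [rewrite (Wmono _ _ _ _ _ E) | case: (W e n m i j)].
Qed.

Lemma Line_eq e n m i j :
  Line e n m i j = Brt e n m i j && ~~ ((0 < minn i j) && e i.-1 j.-1).
Proof.
rewrite /Line /Brt /W GSr.
case: (G e m i j); case: (e (i+m) (j+m)); case: (e i.-1 j.-1);
  rewrite ?andbF ?andbT ?andFb ?andTb /=; apply/idP/idP; lia.
Qed.

Lemma BrtS e n m i j : Brt e n m.+1 i j = Brt e n m i.+1 j.+1 && e i j.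
Proof. by rewrite /Brt !WS; case: (e i j); rewrite /= ?andbT ?andbF. Qed.

Lemma B_split e n m : Bcnt e n m = Ncnt e n m + Bcnt e n m.+1.
Proof.
have -> : Bcnt e n m = Ncnt e n m + \sum_(i < n.+1) \sum_(j < n.+1)
     (Brt e n m i j && ((0 < minn i j) && e i.-1 j.-1)).
  rewrite /Bcnt /Ncnt -big_split; apply: eq_bigr => i _.
  rewrite -big_split; apply: eq_bigr => j _ /=; rewrite Line_eq.
  by case: (Brt e n m i j); case: ((0 < minn i j) && e i.-1 j.-1).
congr (_ + _).
rewrite /Bcnt big_ord_recl /= big1 ?add0n; last by move=> j _; rewrite min0n andbF.
rewrite [RHS]big_ord_recr /= [X in _ = _ + X]big1 ?addn0; last first.
  move=> j _; rewrite /Brt /W.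
  have -> : (n + m.+1 <= n) = false by apply/negbTE/negP; lia.
  by rewrite /= andbF.
apply: eq_bigr => i _.
rewrite big_ord_recl /= andbF add0n.
rewrite [RHS]big_ord_recr /=.
have -> : Brt e n m.+1 i n = false.
  rewrite /Brt /W.
  have -> : (n + m.+1 <= n) = false by apply/negbTE/negP; lia.
  by rewrite /= !andbF.
rewrite addn0; apply: eq_bigr => j _.
rewrite /bump /= !add1n add0n BrtS /= minnSS.
by case: (Brt e n m i.+1 j.+1).
Qed.

Lemma W_big e n m i j : n < m -> W e n m i j = false.
Proof. by move=> h; rewrite /W; apply/negbTE/negP => /and4P[_ h1 _ _]; lia. Qed.

Lemma A_big e n m : n < m -> Acnt e n m = 0.
Proof. by move=> h; rewrite /Acnt big1 // => i _; rewrite big1 // => j _; rewrite W_big. Qed.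

Lemma B_big e n m : n < m -> Bcnt e n m = 0.
Proof. by move=> h; rewrite /Bcnt big1 // => i _; rewrite big1 // => j _; rewrite /Brt W_big. Qed.

Lemma sum_lines e n l :
  \sum_(l <= L < n.+1) L * Ncnt e n L = l * Bcnt e n l + Acnt e n l.+1.
Proof.
move: {2}(n.+1 - l) (erefl (n.+1 - l)) => d; elim: d l => [|d IH] l hd.
  rewrite big_geq; last by lia.
  by rewrite B_big ?A_big //; lia.
rewrite big_ltn; last by lia.
rewrite IH; last by lia.
rewrite (B_split e n l) (A_split e n l.+1).
nia.
Qed.

Definition Pcnt e n m := \sum_(i < n) \sum_(j < n) G e m i j.
Definition Dcnt e n m := \sum_(i < n) \sum_(j < n)
   [&& i != j, G e m i j & ~~ ((i + m <= n) && (j + m <= n))].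

Lemma sum_eq1 n (i : 'I_n) : \sum_(j < n) (nat_of_ord i == nat_of_ord j) = 1.
Proof.
rewrite (bigD1 i) //= eqxx big1 // => j hj.
by case: eqP => // /val_inj E; rewrite E eqxx in hj.
Qed.

Lemma sum_neq n (i : 'I_n) : \sum_(j < n) (nat_of_ord i != nat_of_ord j) = n.-1.
Proof.
have h : \sum_(j < n) (nat_of_ord i == nat_of_ord j) + \sum_(j < n) (nat_of_ord i != nat_of_ord j) = n.
  rewrite -big_split /= (eq_bigr (fun _ => 1)); last by move=> j _; case: eqP.
  by rewrite sum1_card card_ord.
rewrite sum_eq1 in h; lia.
Qed.

Lemma G_diag (e : nat -> nat -> bool) m i : (forall k, e k k) -> G e m i i.
Proof. by move=> h; apply/allP => k _; apply: h. Qed.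

Lemma P_split (e : nat -> nat -> bool) n m : (forall k, e k k) -> 0 < m ->
  Pcnt e n m = n + Acnt e n m + Dcnt e n m.
Proof.
move=> hd hm.
have -> : Acnt e n m = \sum_(i < n) \sum_(j < n) W e n m i j.
  rewrite /Acnt big_ord_recr /= [X in _ + X]big1 ?addn0; last first.
    by move=> j _; have -> : W e n m n j = false by apply/negP => /and4P[_ h _ _]; lia.
  apply: eq_bigr => i _; rewrite big_ord_recr /=.
  have -> : W e n m i n = false by apply/negP => /and4P[_ _ h _]; lia.
  by rewrite addn0.
rewrite /Pcnt /Dcnt.
transitivity (\sum_(i < n) \sum_(j < n) ((nat_of_ord i == nat_of_ord j) + W e n m i j
   + [&& i != j, G e m i j & ~~ ((i + m <= n) && (j + m <= n))])).
  apply: eq_bigr => i _; apply: eq_bigr => j _ /=.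
  rewrite /W; case: (eqVneq i j) => [<-|hij]; rewrite ?eqxx ?G_diag //=.
  rewrite (negbTE (hij : nat_of_ord i != nat_of_ord j)) /=.
  by case: (G e m i j); case: (i + m <= n); case: (j + m <= n).
rewrite (eq_bigr (fun i : 'I_n => \sum_(j < n) (nat_of_ord i == nat_of_ord j)
   + \sum_(j < n) W e n m i j
   + \sum_(j < n) [&& i != j, G e m i j & ~~ ((i + m <= n) && (j + m <= n))])); last first.
  by move=> i _; rewrite !big_split.
rewrite !big_split /=; congr (_ + _ + _).
by rewrite (eq_bigr (fun _ => 1)) ?sum1_card ?card_ord // => i _; rewrite sum_eq1.
Qed.

Lemma count_ge N c : \sum_(i < N) (c <= i) <= N - c.
Proof.
elim: N => [|N IH]; first by rewrite big_ord0.
rewrite big_ord_recr /=; move: IH; set S := \sum_(i < N) _ => IH; case: (leqP c N) => h /=; lia.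
Qed.

Lemma D_half n m :
  \sum_(i < n) \sum_(j < n) ((nat_of_ord i != nat_of_ord j) && (n < i + m)) <= m.-1 * n.-1.
Proof.
have -> : \sum_(i < n) \sum_(j < n) ((nat_of_ord i != nat_of_ord j) && (n < i + m))
   = \sum_(i < n) ((n.+1 - m <= i) * n.-1).
  apply: eq_bigr => i _.
  have -> : (n < i + m) = (n.+1 - m <= i) by apply/idP/idP; lia.
  case: (n.+1 - m <= i); last by rewrite big1 // => j _; rewrite andbF.
  by rewrite mul1n -(sum_neq n i); apply: eq_bigr => j _; rewrite andbT.
rewrite -big_distrl /= leq_mul2r; apply/orP; right.
by apply: leq_trans (count_ge n (n.+1 - m)) _; lia.
Qed.

Lemma D_bound e n m : Dcnt e n m <= 2 * (m.-1 * n.-1).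
Proof.
apply: (@leq_trans (\sum_(i < n) \sum_(j < n) ((nat_of_ord i != nat_of_ord j) && (n < i + m))
   + \sum_(j < n) \sum_(i < n) ((nat_of_ord j != nat_of_ord i) && (n < j + m)))).
  rewrite [X in _ <= _ + X]exchange_big -big_split /= leq_sum // => i _.
  rewrite -big_split /= leq_sum // => j _.
  case: (eqVneq i j) => [->|hij]; first by rewrite eqxx.
  have h1 : nat_of_ord i != nat_of_ord j by [].
  have h2 : nat_of_ord j != nat_of_ord i by rewrite eq_sym.
  rewrite ?hij ?h1 ?h2 /=.
  case: (G e m i j) => //=.
  by case: (leqP (i + m) n) => ?; case: (leqP (j + m) n) => ? //=.
by rewrite (_ : 2 = 1 + 1) // mulnDl mul1n leq_add // D_half.
Qed.

Lemma forall_G (e : nat -> nat -> bool) l i j :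
  [forall k : 'I_l, e (i + k) (j + k)] = G e l i j.
Proof.
apply/forallP/allP => [h k | h k].
  by rewrite mem_iota add0n => hk; apply: (h (Ordinal hk)).
by apply: h; rewrite mem_iota add0n ltn_ord.
Qed.

Lemma num_lines_eq (R : realType) (X : Type) (rho : X -> X -> R) f x n eps L :
  num_lines rho f x n eps L = Ncnt (fun i j => rp_entry rho f x eps i j) n L.
Proof.
rewrite /num_lines (@card_pairs _ (fun i j => is_line rho f x n eps i j L)).
by apply: eq_bigr => i _; apply: eq_bigr => j _; rewrite /is_line forall_G.
Qed.

Lemma corr_eq (R : realType) (X : Type) (rho : X -> X -> R) f x n (eps : R) m :
  (0 <= eps)%R ->
  corr_sum rho f m x n eps =
  ((Pcnt (fun i j => rp_entry rho f x eps i j) n m)%:R / (n ^ 2)%:R)%R.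
Proof.
move=> he.
rewrite /corr_sum (@card_pairs _ (fun i j => bowen rho f m (iter i f x) (iter j f x) <= eps)%R).
congr (_%:R / _)%R; apply: eq_bigr => i _; apply: eq_bigr => j _.
congr nat_of_bool; rewrite /bowen.
apply/bigmax_leP/allP => [[_ h] k | h].
  rewrite mem_iota add0n => hk.
  by have := h (Ordinal hk) isT; rewrite /rp_entry -!iterD addnC [(j + _)%N]addnC.
split => // k _.
have := h k; rewrite mem_iota add0n ltn_ord => /(_ isT).
by rewrite /rp_entry -!iterD addnC [(j + _)%N]addnC.
Qed.

Local Open Scope ring_scope.

Theorem mainTheorem7 (R : realType) (X : Type) (rho : X -> X -> R)
    (f : X -> X) (x : X) (l n : nat) (eps : R) :
  is_metric rho -> metric_continuous rho f ->
  (1 <= l)%N -> (2 <= n)%N -> 0 < eps ->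
  exists delta : R,
    recurrence_rate rho f l x n eps =
      n%:R / (n%:R - 1) *
        (l%:R * corr_sum rho f l x n eps
         - (l%:R - 1) * corr_sum rho f l.+1 x n eps)
      - 1 / (n%:R - 1) + delta
    /\ `|delta| <= 2 * l%:R * (l%:R - 1) / n%:R.
Proof.
move=> [h0 hz hsym htri] _ hl hn heps.
set e := fun i j => rp_entry rho f x eps i j.
have hd : forall k, e k k.
  by move=> k; rewrite /e /rp_entry (proj2 (hz _ _) erefl) ltW.
have RRe : recurrence_rate rho f l x n eps =
    (\sum_(l <= L < n.+1) L * Ncnt e n L)%:R / ((n ^ 2)%:R - n%:R).
  rewrite /recurrence_rate /line_freq natr_sum mulr_suml; apply: eq_bigr => L _.
  by rewrite natrM mulrA num_lines_eq.
rewrite RRe !corr_eq ?ltW // sum_lines.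
rewrite (P_split e n l hd (_ : (0 < l)%N)) // (P_split e n l.+1 hd (_ : (0 < l.+1)%N)) //.
rewrite (A_split e n l) .
have D1 := D_bound e n l; have D2 := D_bound e n l.+1.
set a := Acnt e n l.+1; set b := Bcnt e n l; set d1 := Dcnt e n l; set d2 := Dcnt e n l.+1.
have F1 : (l * d1 <= 2 * (l * (l.-1 * n.-1)))%N.
  by have := leq_mul (leqnn l) D1; nia.
have F2 : (l.-1 * d2 <= 2 * (l * (l.-1 * n.-1)))%N.
  by have := leq_mul (leqnn l.-1) D2; nia.
rewrite -(ler_nat R) in F1; rewrite -(ler_nat R) in F2; move: F2 F1.
rewrite -!subn1 !natrM ?natrX !natrD !natrB //; last by lia.
set L := l%:R; set N := n%:R; set A := a%:R; set B := b%:R; set E1 := d1%:R; set E2 := d2%:R.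
move=> F2 F1.
have N0 : N != 0 by rewrite pnatr_eq0; lia.
have N1 : N - 1 != 0 by rewrite subr_eq0 pnatr_eq1; lia.
have Npos : 1 < N by rewrite ltr1n.
exists (((L - 1) * E2 - L * E1) / (N * (N - 1))).
split.
  rewrite natrM -/L -/B.
  have -> : N * N - N = N * (N - 1) by ring.
  by field; rewrite N0 N1.
have KP : 0 < N * (N - 1) by apply: mulr_gt0; lra.
have E1p : 0 <= E1 by rewrite ler0n.
have E2p : 0 <= E2 by rewrite ler0n.
have Lp : 1 <= L by rewrite ler1n.
have P1 : 0 <= L * E1 by apply: mulr_ge0; lra.
have P2 : 0 <= (L - 1) * E2 by apply: mulr_ge0; lra.
have -> : 2 * L * (L - 1) / N = 2 * (L * ((L - 1) * (N - 1))) / (N * (N - 1)).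
  by field; rewrite N0 N1.
have KI : 0 < (N * (N - 1))^-1 by rewrite invr_gt0.
rewrite normrM (gtr0_norm KI) ler_pM2r //.
rewrite ler_norml; apply/andP; split; lra.
Qed.
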